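(* Let $G$ be a linear reductive algebraic group over $\mathbb{C}$ with maximal torus $T\subseteq B$, root system $\Phi$ with positive roots $\Phi^+$ and simple roots $\Delta$, and Weyl group $W$. Let $S\in\mathfrak{h}=\mathrm{Lie}(T)$ be a non-regular semisimple element such that $M=Z_G(S)$ is a standard Levi subgroup. Let $v\in{}^MW$, let $L=L_v$ and write $v=x_vw_v$ with $w_v$ the longest element of $W_L$ and $x_v\in W^L$. Then $\tau=x_vz$ is an element of ${}^MW$ for every $z\in W_L$.
   Context: For $w\in W$, $N(w)=\{\gamma\in\Phi^+ : w(\gamma)\in-\Phi^+\}$ and $\ell(w)$ is the length. For a subset $\Delta_L\subseteq\Delta$, $L$ denotes the standard Levi subgroup, $\Phi_L$ its root subsystem with $\Phi_L^+=\Phi_L\cap\Phi^+$, $W_L=\langle s_\alpha:\alpha\in\Delta_L\rangle$, ${}^LW=\{v\in W: N(v^{-1})\subseteq\Phi^+\setminus\Phi_L^+\}$, $W^L=\{v\in W: N(v)\subseteq\Phi^+\setminus\Phi_L^+\}$. The Levi $M=Z_G(S)$ has $\Phi_M=\{\gamma:\gamma(S)=0\}$ and $\Delta_M=\{\alpha\in\Delta:\alpha(S)=0\}$. For $v\in W$, $R(v)=N(v)\cap\Delta$ and $L_v$ is the standard Levi subgroup with $\Delta_{L_v}=R(v)$; $v$ factors uniquely as $v=x_vw_v$ with $x_v\in W^{L_v}$, $w_v$ the longest element of $W_{L_v}$, $\ell(v)=\ell(x_v)+\ell(w_v)$. *)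

(* Defs.v *)
From HB Require Import structures.
From mathcomp Require Import all_boot all_order all_algebra.
Set Implicit Arguments. Unset Strict Implicit. Unset Printing Implicit Defensive.
Import Order.TTheory GRing.Theory Num.Theory.
Local Open Scope ring_scope.

(* The root datum (X, Phi, X^vee, Phi^vee) of G w.r.t. T:
   X = X^*(T) = Z^n (column vectors), X^vee = X_*(T) = Z^n,
   pairing <x, y> = y^T x, coroot map [cor : alpha |-> alpha^vee]. *)
Section RootDatum.
Variable n : nat.
Notation vec := 'cV[int]_n.

Definition pairing (x y : vec) : int := (y^T *m x) 0 0.

Definition refl (a av : vec) : 'M[int]_n := 1%:M - a *m av^T.

Variable Phi : seq vec.
Variable cor : vec -> vec.

Definition is_root_datum : Prop :=
  uniq Phi /\ 0 \notin Phi /\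
  (forall a, a \in Phi -> pairing a (cor a) = 2) /\
  (forall a b, a \in Phi -> b \in Phi -> cor a = cor b -> a = b) /\
  (forall a b, a \in Phi -> b \in Phi -> refl a (cor a) *m b \in Phi) /\
  (forall a b, a \in Phi -> b \in Phi -> refl (cor a) a *m cor b \in map cor Phi) /\
  (forall a (c : int), a \in Phi -> c *: a \in Phi -> c = 1 \/ c = -1).

Definition sref (a : vec) : 'M[int]_n := refl a (cor a).

Inductive gen_by (gens : seq vec) : 'M[int]_n -> Prop :=
| gen_by1 : gen_by gens 1%:M
| gen_byS a w : a \in gens -> gen_by gens w -> gen_by gens (sref a *m w).

Definition Weyl (w : 'M[int]_n) : Prop := gen_by Phi w.

(* Positive system Phi^+ (determined by B), given by a regular functional lam *)
Variable lam : 'rV[int]_n.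
Definition regular_functional : Prop := {in Phi, forall a, (lam *m a) 0 0 != 0}.
Definition posroots : seq vec := [seq a <- Phi | 0 < (lam *m a) 0 0].
Definition simple_roots : seq vec :=
  [seq a <- posroots | ~~ has (fun b => (a - b) \in posroots) posroots].

Definition word_prod (s : seq vec) : 'M[int]_n := foldr (fun a w => sref a *m w) 1%:M s.
Definition has_length (w : 'M[int]_n) (k : nat) : Prop :=
  (exists s, [/\ all (fun a => a \in simple_roots) s, size s = k & word_prod s = w]) /\
  (forall s, all (fun a => a \in simple_roots) s -> word_prod s = w -> (k <= size s)%N).

Definition longest_in (DL : seq vec) (w : 'M[int]_n) : Prop :=
  gen_by DL w /\
  forall u k j, gen_by DL u -> has_length u k -> has_length w j -> (k <= j)%N.

(* g lies in the span of DL (so g \in Phi_L when g \in Phi) *)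
Definition in_span (DL : seq vec) (g : vec) : Prop :=
  exists c : vec -> int, g = \sum_(a <- DL) c a *: a.

Definition inv_set (w : 'M[int]_n) (g : vec) : Prop :=
  g \in posroots /\ - (w *m g) \in posroots.

(* v \in ^L W :  N(v^{-1}) \subseteq Phi^+ \ Phi_L^+ *)
Definition left_min (DL : seq vec) (v : 'M[int]_n) : Prop :=
  Weyl v /\ forall g, inv_set (invmx v) g -> ~ in_span DL g.

(* v \in W^L :  N(v) \subseteq Phi^+ \ Phi_L^+ *)
Definition right_min (DL : seq vec) (v : 'M[int]_n) : Prop :=
  Weyl v /\ forall g, inv_set v g -> ~ in_span DL g.

Definition Rdesc (v : 'M[int]_n) : seq vec :=
  [seq a <- simple_roots | - (v *m a) \in posroots].

End RootDatum.

(* An element S of h = X_*(T) \otimes C = C^n; gamma(S) = sum_i gamma_i S_i *)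
Definition evS (C : numClosedFieldType) (n : nat) (S : 'rV[C]_n) (g : 'cV[int]_n) : C :=
  (S *m map_mx (fun z : int => z%:~R) g) 0 0.

Definition DeltaM (C : numClosedFieldType) (n : nat) (Phi : seq 'cV[int]_n)
  (lam : 'rV[int]_n) (S : 'rV[C]_n) : seq 'cV[int]_n :=
  [seq a <- simple_roots Phi lam | evS S a == 0].

(* Main.v *)
Require Import Defs.
From mathcomp Require Import all_boot all_order all_algebra.
From mathcomp Require Import zify ring lra.
From Stdlib Require Import Classical.
Set Implicit Arguments. Unset Strict Implicit. Unset Printing Implicit Defensive.
Import Order.TTheory GRing.Theory Num.Theory.
Local Open Scope ring_scope.

Section Basic.
Variable n : nat.
Local Notation vec := ('cV[int]_n).

Lemma pairingDl (x x' y : vec) : pairing (x + x') y = pairing x y + pairing x' y.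
Proof. by rewrite /pairing mulmxDr mxE. Qed.
Lemma pairingZl (k : int) (x y : vec) : pairing (k *: x) y = k * pairing x y.
Proof. by rewrite /pairing -scalemxAr mxE. Qed.
Lemma pairingNl (x y : vec) : pairing (- x) y = - pairing x y.
Proof. by rewrite -scaleN1r pairingZl mulN1r. Qed.
Lemma pairingBl (x x' y : vec) : pairing (x - x') y = pairing x y - pairing x' y.
Proof. by rewrite pairingDl pairingNl. Qed.
Lemma pairing0l (y : vec) : pairing 0 y = 0.
Proof. by rewrite /pairing mulmx0 mxE. Qed.
Lemma pairing_suml (I : Type) (r : seq I) (F : I -> vec) y :
  pairing (\sum_(i <- r) F i) y = \sum_(i <- r) pairing (F i) y.
Proof.
elim: r => [|a r IH]; first by rewrite !big_nil pairing0l.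
by rewrite !big_cons pairingDl IH.
Qed.
Lemma pairingC (x y : vec) : pairing x y = pairing y x.
Proof.
rewrite /pairing.
have -> : y^T *m x = (x^T *m y)^T by rewrite trmx_mul trmxK.
by rewrite mxE.
Qed.
Lemma pairingDr (x y y' : vec) : pairing x (y + y') = pairing x y + pairing x y'.
Proof. by rewrite pairingC pairingDl -!(pairingC x). Qed.
Lemma pairingZr (k : int) (x y : vec) : pairing x (k *: y) = k * pairing x y.
Proof. by rewrite pairingC pairingZl pairingC. Qed.
Lemma pairingNr (x y : vec) : pairing x (- y) = - pairing x y.
Proof. by rewrite pairingC pairingNl pairingC. Qed.
Lemma pairing_sumr (I : Type) (r : seq I) (F : I -> vec) x :
  pairing x (\sum_(i <- r) F i) = \sum_(i <- r) pairing x (F i).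
Proof.
rewrite pairingC pairing_suml; apply: eq_bigr => i _; exact: pairingC.
Qed.
Lemma pairing_mull (M : 'M[int]_n) (x y : vec) : pairing (M *m x) y = pairing x (M^T *m y).
Proof. by rewrite /pairing trmx_mul trmxK mulmxA. Qed.
Lemma pairing_mulr (M : 'M[int]_n) (x y : vec) : pairing x (M *m y) = pairing (M^T *m x) y.
Proof. by rewrite pairingC pairing_mull pairingC. Qed.

Lemma trmx_pairing (x w : vec) : w^T *m x = (pairing x w)%:M.
Proof. by rewrite [LHS]mx11_scalar. Qed.

Lemma refl_apply (u w x : vec) : refl u w *m x = x - pairing x w *: u.
Proof.
by rewrite /refl mulmxBl mul1mx -mulmxA trmx_pairing mul_mx_scalar.
Qed.

Lemma refl_tr (u w : vec) : (refl u w)^T = refl w u.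
Proof.
by rewrite /refl raddfB /= trmx1 trmx_mul trmxK.
Qed.

Lemma refl_invol (u w : vec) : pairing u w = 2 -> refl u w *m refl u w = 1%:M.
Proof.
move=> h2; rewrite {1}/refl mulmxBl mul1mx /refl mulmxBr mulmx1.
rewrite -!mulmxA (mulmxA w^T) trmx_pairing h2 mul_scalar_mx -scalemxAr.
rewrite scaler_nat mulr2n; set A := u *m w^T.
rewrite opprD addrA opprK -[_ - A - A]addrA -opprD; exact: subrK.
Qed.

Lemma refl_invol_v (u w x : vec) : pairing u w = 2 -> refl u w *m (refl u w *m x) = x.
Proof. by move=> h; rewrite mulmxA refl_invol // mul1mx. Qed.
End Basic.

Lemma sum_ge0_eq0 (T : eqType) (r : seq T) (F : T -> int) :
  (forall i, i \in r -> 0 <= F i) -> \sum_(i <- r) F i = 0 -> forall i, i \in r -> F i = 0.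
Proof.
elim: r => [|a r IH] //= hF; rewrite big_cons => /eqP.
rewrite paddr_eq0; first last.
- by rewrite big_seq; apply: sumr_ge0 => i hi; apply: hF; rewrite inE hi orbT.
- by apply: hF; rewrite inE eqxx.
case/andP=> /eqP ha /eqP hr i; rewrite inE => /orP[/eqP -> //|].
by apply: IH => // j hj; apply: hF; rewrite inE hj orbT.
Qed.

Lemma scale_int_cancel (m : nat) (k : int) (x : 'cV[int]_m) : k *: x = 0 -> k != 0 -> x = 0.
Proof.
move=> h hk; apply/matrixP => i j; have := congr1 (fun M : 'cV[int]_m => M i j) h.
by rewrite !mxE => /eqP; rewrite mulf_eq0 (negbTE hk) /= => /eqP.
Qed.

Lemma perm_invol (T : eqType) (s : seq T) (f : T -> T) :
  uniq s -> (forall c, c \in s -> f c \in s) -> (forall c, f (f c) = c) ->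
  perm_eq (map f s) s.
Proof.
move=> us hs hf; apply: uniq_perm => //.
  by rewrite map_inj_uniq //; exact: (can_inj hf).
move=> c; apply/mapP/idP => [[d hd ->]|hc]; first exact: hs.
by exists (f c); [exact: hs | rewrite hf].
Qed.

Lemma sum_ind (m : nat) (s : seq 'cV[int]_m) (a : 'cV[int]_m) (k : int) :
  uniq s -> a \in s -> \sum_(b <- s) (if b == a then k else 0) *: b = k *: a.
Proof.
move=> us ha; rewrite (big_rem a) //= eqxx big_seq_cond big1 ?addr0 //.
move=> b /andP[hb _]; case: eqP => [eba|]; last by rewrite scale0r.
by move: hb; rewrite eba => hb; move: us; rewrite (perm_uniq (perm_to_rem ha)) /= hb.
Qed.

Section Roots.
Variable n : nat.
Local Notation vec := ('cV[int]_n).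
Variable Phi : seq vec.
Variable cor : vec -> vec.
Variable lam : 'rV[int]_n.
Hypothesis hRD : is_root_datum Phi cor.
Hypothesis hlam : regular_functional Phi lam.

Definition lv (y : vec) : int := (lam *m y) 0 0.
Lemma lvD x y : lv (x + y) = lv x + lv y. Proof. by rewrite /lv mulmxDr mxE. Qed.
Lemma lvZ k x : lv (k *: x) = k * lv x. Proof. by rewrite /lv -scalemxAr mxE. Qed.
Lemma lvN x : lv (- x) = - lv x. Proof. by rewrite -scaleN1r lvZ mulN1r. Qed.
Lemma lvB x y : lv (x - y) = lv x - lv y. Proof. by rewrite lvD lvN. Qed.
Lemma lv_sum (I : Type) (r : seq I) (F : I -> vec) : lv (\sum_(i <- r) F i) = \sum_(i <- r) lv (F i).
Proof.
elim: r => [|a r IH]; first by rewrite !big_nil /lv mulmx0 mxE.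
by rewrite !big_cons lvD IH.
Qed.

Lemma uPhi : uniq Phi. Proof. by case: hRD. Qed.
Lemma h2 a : a \in Phi -> pairing a (cor a) = 2. Proof. by case: hRD => _ [_ [h _]]; exact: h. Qed.
Lemma hcinj a b : a \in Phi -> b \in Phi -> cor a = cor b -> a = b.
Proof. by case: hRD => _ [_ [_ [h _]]]; exact: h. Qed.
Lemma hrefl a b : a \in Phi -> b \in Phi -> refl a (cor a) *m b \in Phi.
Proof. by case: hRD => _ [_ [_ [_ [h _]]]]; exact: h. Qed.
Lemma hcorefl a b : a \in Phi -> b \in Phi -> refl (cor a) a *m cor b \in map cor Phi.
Proof. by case: hRD => _ [_ [_ [_ [_ [h _]]]]]; exact: h. Qed.

Lemma lv_neq0 a : a \in Phi -> lv a != 0.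
Proof. move=> ha; have H := hlam ha; rewrite /lv; exact H. Qed.

Lemma sref_apply (a x : vec) : sref cor a *m x = x - pairing x (cor a) *: a.
Proof. exact: refl_apply. Qed.

Lemma sref_root a b : a \in Phi -> b \in Phi -> sref cor a *m b \in Phi.
Proof. exact: hrefl. Qed.

Lemma sref_invol (a x : vec) : a \in Phi -> sref cor a *m (sref cor a *m x) = x.
Proof. by move=> ha; apply: refl_invol_v; exact: h2. Qed.

Lemma sref_invol_mx a : a \in Phi -> sref cor a *m sref cor a = 1%:M.
Proof. by move=> ha; apply: refl_invol; exact: h2. Qed.

Lemma negPhi a : a \in Phi -> - a \in Phi.
Proof.
move=> ha; have := sref_root ha ha; rewrite sref_apply h2 //.
by rewrite scaler_nat mulr2n opprD addrA subrr sub0r.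
Qed.

Lemma posrootsE a : (a \in posroots Phi lam) = (0 < lv a) && (a \in Phi).
Proof. by rewrite mem_filter. Qed.

Lemma simpleE a : (a \in simple_roots Phi lam) =
  ~~ has (fun b => (a - b) \in posroots Phi lam) (posroots Phi lam) && (a \in posroots Phi lam).
Proof. by rewrite mem_filter. Qed.

Lemma simple_pos a : a \in simple_roots Phi lam -> a \in posroots Phi lam.
Proof. by rewrite simpleE => /andP[]. Qed.

Lemma simple_Phi a : a \in simple_roots Phi lam -> a \in Phi.
Proof. by move/simple_pos; rewrite posrootsE => /andP[]. Qed.

Lemma simple_lv a : a \in simple_roots Phi lam -> 0 < lv a.
Proof. by move/simple_pos; rewrite posrootsE => /andP[]. Qed.

Lemma uniq_simple : uniq (simple_roots Phi lam).
Proof. by rewrite !filter_uniq // uPhi. Qed.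

Lemma root_sign a : a \in Phi -> (0 < lv a) || (lv a < 0).
Proof. by move=> ha; have := lv_neq0 ha; case: (ltgtP (lv a) 0). Qed.



Lemma gen_mul (g : seq vec) u u' : gen_by cor g u -> gen_by cor g u' -> gen_by cor g (u *m u').
Proof.
move=> gu gu'; elim: gu => [|a w ha _ IH]; first by rewrite mul1mx.
by rewrite -mulmxA; apply: gen_byS.
Qed.

Lemma gen_sref (g : seq vec) a : a \in g -> gen_by cor g (sref cor a).
Proof. by move=> ha; rewrite -[sref cor a]mulmx1; apply: gen_byS => //; exact: gen_by1. Qed.

Lemma gen_inv (g : seq vec) u : {subset g <= Phi} -> gen_by cor g u ->
  exists u', [/\ gen_by cor g u', u' *m u = 1%:M & u *m u' = 1%:M].
Proof.
move=> sg gu; elim: gu => [|a w ha _ [w' [gw' h1 h2']]].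
  by exists 1%:M; rewrite mul1mx; split=> //; exact: gen_by1.
exists (w' *m sref cor a); split.
- by apply: gen_mul => //; exact: gen_sref.
- by rewrite -mulmxA (mulmxA (sref cor a)) sref_invol_mx ?sg // mul1mx.
- by rewrite -mulmxA (mulmxA w) h2' mul1mx sref_invol_mx ?sg.
Qed.

Lemma gen_unit (g : seq vec) u : {subset g <= Phi} -> gen_by cor g u ->
  [/\ u \in unitmx, gen_by cor g (invmx u), invmx u *m u = 1%:M & u *m invmx u = 1%:M].
Proof.
move=> sg gu; have [u' [gu' h1 h2']] := gen_inv sg gu.
have uu : u \in unitmx by case: (mulmx1_unit h2').
have -> : invmx u = u'.
  by rewrite -[invmx u]mulmx1 -h2' mulmxA mulVmx // mul1mx.
by split.
Qed.

Lemma gen_Phi (g : seq vec) u b : {subset g <= Phi} -> gen_by cor g u -> b \in Phi -> u *m b \in Phi.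
Proof.
move=> sg gu hb; elim: gu => [|a w ha _ IH]; first by rewrite mul1mx.
by rewrite -mulmxA; apply: sref_root; [exact: sg | exact: IH].
Qed.

Lemma in_span_opp (DL : seq vec) y : in_span DL y -> in_span DL (- y).
Proof.
case=> c ->; exists (fun b => - c b); rewrite -sumrN; apply: eq_bigr => b _.
by rewrite scaleNr.
Qed.

Lemma in_span_sref (DL : seq vec) a y : uniq DL -> a \in DL -> in_span DL y ->
  in_span DL (sref cor a *m y).
Proof.
move=> uDL ha [c ->]; rewrite sref_apply.
exists (fun b => c b - (if b == a then pairing (\sum_(b <- DL) c b *: b) (cor a) else 0)).
rewrite -(sum_ind _ uDL ha) -sumrB; apply: eq_bigr => b _; by rewrite scalerBl.
Qed.

Lemma in_span_gen (DL : seq vec) u y : uniq DL -> gen_by cor DL u -> in_span DL y ->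
  in_span DL (u *m y).
Proof.
move=> uDL gu hy; elim: gu => [|a w ha _ IH]; first by rewrite mul1mx.
by rewrite -mulmxA; apply: in_span_sref => //; exact: IH.
Qed.

Lemma in_span_sref_inv (DL : seq vec) a y : uniq DL -> {subset DL <= Phi} -> a \in DL ->
  in_span DL (sref cor a *m y) -> in_span DL y.
Proof.
move=> uDL sDL ha h; rewrite -(sref_invol y (sDL a ha)); exact: in_span_sref.
Qed.

Definition Cv := map cor Phi.
Lemma uCv : uniq Cv.
Proof.
rewrite /Cv map_inj_in_uniq ?uPhi // => a b ha hb; exact: hcinj.
Qed.

Definition ip (x y : vec) : int := \sum_(c <- Cv) pairing x c * pairing y c.
Definition ipv (x y : vec) : int := \sum_(a <- Phi) pairing a x * pairing a y.

Lemma ipC x y : ip x y = ip y x.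
Proof. by apply: eq_bigr => c _; rewrite mulrC. Qed.
Lemma ipDl x x' y : ip (x + x') y = ip x y + ip x' y.
Proof. by rewrite /ip -big_split; apply: eq_bigr => c _; rewrite pairingDl mulrDl. Qed.
Lemma ipZl k x y : ip (k *: x) y = k * ip x y.
Proof. by rewrite /ip mulr_sumr; apply: eq_bigr => c _; rewrite pairingZl mulrA. Qed.
Lemma ipNl x y : ip (- x) y = - ip x y.
Proof. by rewrite -scaleN1r ipZl mulN1r. Qed.
Lemma ipBl x x' y : ip (x - x') y = ip x y - ip x' y.
Proof. by rewrite ipDl ipNl. Qed.
Lemma ipNr x y : ip x (- y) = - ip x y.
Proof. by rewrite ipC ipNl ipC. Qed.
Lemma ipBr x y y' : ip x (y - y') = ip x y - ip x y'.
Proof. by rewrite ipC ipBl !(ipC x). Qed.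
Lemma ip_suml (I : Type) (r : seq I) (F : I -> vec) y :
  ip (\sum_(i <- r) F i) y = \sum_(i <- r) ip (F i) y.
Proof.
elim: r => [|a r IH]; last by rewrite !big_cons ipDl IH.
by rewrite !big_nil /ip big1 // => c _; rewrite pairing0l mul0r.
Qed.

Lemma ipvC x y : ipv x y = ipv y x.
Proof. by apply: eq_bigr => c _; rewrite mulrC. Qed.
Lemma ipvDl x x' y : ipv (x + x') y = ipv x y + ipv x' y.
Proof. by rewrite /ipv -big_split; apply: eq_bigr => c _; rewrite pairingDr mulrDl. Qed.
Lemma ipvZl k x y : ipv (k *: x) y = k * ipv x y.
Proof. by rewrite /ipv mulr_sumr; apply: eq_bigr => c _; rewrite pairingZr mulrA. Qed.
Lemma ipvNl x y : ipv (- x) y = - ipv x y.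
Proof. by rewrite -scaleN1r ipvZl mulN1r. Qed.
Lemma ipvBl x x' y : ipv (x - x') y = ipv x y - ipv x' y.
Proof. by rewrite ipvDl ipvNl. Qed.
Lemma ipvNr x y : ipv x (- y) = - ipv x y.
Proof. by rewrite ipvC ipvNl ipvC. Qed.

Lemma ip_sref a x y : a \in Phi -> ip (sref cor a *m x) (sref cor a *m y) = ip x y.
Proof.
move=> ha; rewrite /ip.
under eq_bigr do rewrite !pairing_mull refl_tr.
rewrite -(big_map (fun c => refl (cor a) a *m c) predT (fun c => pairing x c * pairing y c)).
apply: perm_big; apply: perm_invol; first exact: uCv.
- by move=> c /mapP[b hb ->]; exact: hcorefl.
- by move=> c; apply: refl_invol_v; rewrite pairingC h2.
Qed.

Lemma ipv_t a x y : a \in Phi ->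
  ipv (refl (cor a) a *m x) (refl (cor a) a *m y) = ipv x y.
Proof.
move=> ha; rewrite /ipv.
under eq_bigr do rewrite !pairing_mulr refl_tr.
rewrite -(big_map (fun c => refl a (cor a) *m c) predT (fun c => pairing c x * pairing c y)).
apply: perm_big; apply: perm_invol; first exact: uPhi.
- by move=> c hc; exact: hrefl.
- by move=> c; apply: refl_invol_v; rewrite h2.
Qed.

Lemma sref_self a : a \in Phi -> sref cor a *m a = - a.
Proof.
move=> ha; rewrite sref_apply h2 // scaler_nat mulr2n opprD addrA subrr sub0r //.
Qed.

Lemma ip_rel x a : a \in Phi -> pairing x (cor a) * ip a a = 2 * ip x a.
Proof.
move=> ha; have := ip_sref x a ha; rewrite sref_self // sref_apply.
rewrite ipNr ipBl ipZl => h; lia.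
Qed.

Lemma ipv_rel y a : a \in Phi -> pairing a y * ipv (cor a) (cor a) = 2 * ipv y (cor a).
Proof.
move=> ha; have := ipv_t y (cor a) ha.
have -> : refl (cor a) a *m cor a = - cor a.
  by rewrite refl_apply pairingC h2 // scaler_nat mulr2n opprD addrA subrr sub0r.
rewrite refl_apply ipvNr ipvBl ipvZl (pairingC y a) => h; lia.
Qed.

Lemma sq_ge0 (z : int) : 0 <= z * z.
Proof. by rewrite -expr2 sqr_ge0. Qed.

Lemma ip_ge0 x : 0 <= ip x x.
Proof. by apply: sumr_ge0 => c _; exact: sq_ge0. Qed.
Lemma ipv_ge0 x : 0 <= ipv x x.
Proof. by apply: sumr_ge0 => c _; exact: sq_ge0. Qed.

Lemma ip_pos a : a \in Phi -> 0 < ip a a.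
Proof.
move=> ha; rewrite /ip (big_rem (cor a)) /=; last by apply: map_f.
rewrite h2 //; apply: (@lt_le_trans _ _ (2 * 2)) => //.
by rewrite lerDl; apply: sumr_ge0 => c _; exact: sq_ge0.
Qed.

Lemma ipv_pos a : a \in Phi -> 0 < ipv (cor a) (cor a).
Proof.
move=> ha; rewrite /ipv (big_rem a) //=.
rewrite h2 //; apply: (@lt_le_trans _ _ (2 * 2)) => //.
by rewrite lerDl; apply: sumr_ge0 => c _; exact: sq_ge0.
Qed.

Lemma sq_eq0 (z : int) : z * z = 0 -> z = 0.
Proof. by move/eqP; rewrite mulf_eq0 orbb => /eqP. Qed.

Lemma ip_eq0 x : ip x x = 0 -> forall a, a \in Phi -> pairing x (cor a) = 0.
Proof.
move=> h a ha; apply: sq_eq0.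
have := @sum_ge0_eq0 _ Cv (fun c => pairing x c * pairing x c) (fun c _ => sq_ge0 _) h (cor a) (map_f cor ha).
by [].
Qed.

Lemma ipv_eq0 y : ipv y y = 0 -> forall a, a \in Phi -> pairing a y = 0.
Proof.
move=> h a ha; apply: sq_eq0.
have := @sum_ge0_eq0 _ Phi (fun c => pairing c y * pairing c y) (fun c _ => sq_ge0 _) h a ha.
by [].
Qed.

Definition psi (y : vec) : vec := \sum_(a <- Phi) pairing a y *: a.

Lemma pairing_psi y y' : pairing (psi y) y' = ipv y y'.
Proof. by rewrite pairing_suml; apply: eq_bigr => a _; rewrite pairingZl. Qed.

Lemma vec_ext (x x' : vec) : (forall y, pairing x y = pairing x' y) -> x = x'.
Proof.
move=> h; apply/matrixP => i j; rewrite [j]ord1.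
have e : forall z : vec, pairing z (delta_mx i 0) = z i 0.
  by move=> z; rewrite /pairing trmx_delta -rowE mxE.
by rewrite -!e h.
Qed.

Lemma psi_cor b : b \in Phi -> 2 *: psi (cor b) = ipv (cor b) (cor b) *: b.
Proof.
move=> hb; apply: vec_ext => y; rewrite !pairingZl pairing_psi.
by rewrite (ipvC (cor b) y) -ipv_rel // mulrC.
Qed.

Lemma psiZ k y : psi (k *: y) = k *: psi y.
Proof.
rewrite /psi scaler_sumr; apply: eq_bigr => a _; by rewrite pairingZr scalerA.
Qed.

Lemma psi_sum (I : Type) (r : seq I) (F : I -> vec) : psi (\sum_(i <- r) F i) = \sum_(i <- r) psi (F i).
Proof.
elim: r => [|a r IH].
  rewrite !big_nil /psi big1 // => b _; by rewrite pairingC pairing0l scale0r.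
rewrite !big_cons -IH /psi -big_split; apply: eq_bigr => b _; by rewrite pairingDr scalerDl.
Qed.

Lemma psi_eq0 y : (forall a, a \in Phi -> pairing a y = 0) -> psi y = 0.
Proof. by move=> h; rewrite /psi big_seq big1 // => a ha; rewrite h // scale0r. Qed.

Lemma ip_definite (r : seq vec) (c : vec -> int) :
  {subset r <= Phi} -> ip (\sum_(b <- r) c b *: b) (\sum_(b <- r) c b *: b) = 0 ->
  \sum_(b <- r) c b *: b = 0.
Proof.
move=> sr h; set x := \sum_(b <- r) c b *: b in h *.
have hx := ip_eq0 h.
set K := fun b => ipv (cor b) (cor b).
set N := \prod_(b <- r) K b.
set u := fun b => \prod_(b' <- rem b r) K b'.
have hN : N != 0.
  rewrite /N big_seq prodf_seq_neq0; apply/allP => b hb /=.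
  by rewrite hb /K /=; apply: lt0r_neq0; apply: ipv_pos; exact: sr.
have hu : forall b, b \in r -> u b * K b = N.
  by move=> b hb; rewrite /N (big_rem b) //= mulrC.
set z := \sum_(b <- r) (c b * u b) *: cor b.
have e1 : 2 *: psi z = N *: x.
  rewrite /z psi_sum scaler_sumr /x scaler_sumr big_seq [RHS]big_seq.
  apply: eq_bigr => b hb; rewrite psiZ scalerA mulrC -scalerA psi_cor ?sr //.
  by rewrite scalerA scalerA -mulrA -/(K b) hu // mulrC.
have e2 : pairing x z = 0.
  rewrite /z pairing_sumr big_seq big1 // => b hb; by rewrite pairingZr hx ?sr // mulr0.
have e3 : ipv z z = 0.
  have := congr1 (fun w => pairing w z) e1; rewrite /= !pairingZl pairing_psi e2 mulr0.
  by move/eqP; rewrite mulf_eq0 /= => /eqP.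
have e4 : N *: x = 0 by rewrite -e1 psi_eq0 ?scaler0 //; exact: ipv_eq0.
exact: (scale_int_cancel e4 hN).
Qed.

Local Notation Delta := (simple_roots Phi lam).

Lemma nn_pos g : g \in posroots Phi lam ->
  exists d : vec -> int, (forall b, 0 <= d b) /\ g = \sum_(b <- Delta) d b *: b.
Proof.
suff H : forall m : nat, forall g, g \in posroots Phi lam -> lv g <= m%:Z ->
  exists d : vec -> int, (forall b, 0 <= d b) /\ g = \sum_(b <- Delta) d b *: b.
  move=> hg; apply: (H `|lv g|%N) => //; by rewrite abszE ler_norm.
elim=> [|m IH] {}g hg hm.
  by move: hg; rewrite posrootsE => /andP[h _]; lia.
case hs: (g \in Delta).
  exists (fun b => if b == g then 1 else 0); split; first by move=> b; case: eqP.
  by rewrite sum_ind ?uniq_simple // scale1r.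
move: hs; rewrite simpleE hg andbT => /negbFE /hasP [c hc hgc].
have := hc; rewrite posrootsE => /andP[lc _].
have := hgc; rewrite posrootsE lvB => /andP[lgc _].
have [d1 [hd1 e1]] := IH c hc ltac:(lia).
have [d2 [hd2 e2]] := IH (g - c) hgc ltac:(rewrite lvB; lia).
exists (fun b => d1 b + d2 b); split; first by move=> b; apply: addr_ge0.
rewrite -[LHS](subrK c) e2 e1 -big_split; apply: eq_bigr => b _.
by rewrite scalerDl addrC.
Qed.

Lemma one_false b b' : b \in Delta -> b' \in Delta -> pairing b' (cor b) = 1 -> False.
Proof.
move=> hb hb' h1.
have hbP := simple_Phi hb; have hb'P := simple_Phi hb'.
have e : sref cor b *m b' = b' - b by rewrite sref_apply h1 scale1r.
have hr := sref_root hbP hb'P; rewrite e in hr.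
case/orP: (root_sign hr) => hs.
  move: hb'; rewrite simpleE => /andP[/hasP H _]; apply: H; exists (b' - b).
    by rewrite posrootsE hs hr.
  by rewrite opprB addrC subrK simple_pos.
have hr' := negPhi hr; rewrite opprB in hr'.
move: hb; rewrite simpleE => /andP[/hasP H _]; apply: H; exists (b - b').
  by rewrite posrootsE hr' andbT -opprB lvN oppr_gt0.
by rewrite opprB addrC subrK simple_pos.
Qed.

Lemma ipZr k x y : ip x (k *: y) = k * ip x y.
Proof. by rewrite ipC ipZl ipC. Qed.

Lemma cs_ip x y : 0 < ip x x -> ip x y * ip x y <= ip x x * ip y y.
Proof.
move=> hx.
have E : ip (ip x y *: x - ip x x *: y) (ip x y *: x - ip x x *: y) =
         ip x x * (ip x x * ip y y - ip x y * ip x y).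
  by rewrite ipBl !ipBr !ipZl !ipZr (ipC y x); ring.
by have := ip_ge0 (ip x y *: x - ip x x *: y); rewrite E pmulr_rge0 // subr_ge0.
Qed.

Lemma arith_pq (p q A B C: int) : 2 <= p -> 2 <= q -> 0 < A -> 0 < B ->
  p * A = 2 * C -> q * B = 2 * C -> C * C <= A * B -> p = 2 /\ q = 2.
Proof.
move=> hp hq hA hB e1 e2 cs.
have e3 : (p * q) * (A * B) = 4 * (C * C).
  have -> : (p*q)*(A*B) = (p*A)*(q*B) by ring.
  rewrite e1 e2; ring.
have hAB : 0 < A * B by rewrite mulr_gt0.
have : (p * q - 4) * (A * B) <= 0.
  rewrite mulrBl e3 subr_le0; lia.
rewrite pmulr_lle0 // => h; nia.
Qed.

Lemma no_null b b' : b \in Phi -> b' \in Phi -> b != b' ->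
  pairing b (cor b') = 2 -> pairing b' (cor b) = 2 ->
  (forall a, a \in Phi -> pairing (b - b') (cor a) = 0) -> False.
Proof.
move=> hb hb' hne hq hp hy.
set y := b - b'.
pose f (k : nat) : vec := b + (k%:Z * 2) *: y.
have hf : forall k, f k \in Phi.
  elim=> [|k IH]; first by rewrite /f mul0r scale0r addr0.
  have e : f k.+1 = sref cor b *m (sref cor b' *m f k).
    rewrite (sref_apply b') /f pairingDl pairingZl hy // mulr0 addr0 hq.
    rewrite sref_apply !pairingBl !pairingDl !pairingZl hy // mulr0 addr0 hp h2 //.
    apply/matrixP => i j; rewrite /y !mxE -[k.+1]addn1 PoszD; ring.
  by rewrite e; apply: sref_root => //; apply: sref_root.
have fi : injective f.
  move=> k k' /addrI /eqP; rewrite -subr_eq0 -scalerBl => /eqP h.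
  case: (eqVneq (k%:Z * 2 - k'%:Z * 2) 0) => [h0|h0]; first by lia.
  have := scale_int_cancel h h0; move/eqP; rewrite subr_eq0 (negbTE hne) //.
have hsub : {subset map f (iota 0 (size Phi).+1) <= Phi} by move=> z /mapP[k _ ->].
have := uniq_leq_size _ hsub.
by rewrite map_inj_uniq // iota_uniq size_map size_iota ltnn => /(_ isT).
Qed.

Lemma obtuse b b' : b \in Delta -> b' \in Delta -> b != b' -> ip b b' <= 0.
Proof.
move=> hb hb' hne; rewrite leNgt; apply/negP => hpos.
have hbP := simple_Phi hb; have hb'P := simple_Phi hb'.
have e1 := ip_rel b' hbP; have e2 := ip_rel b hb'P.
rewrite ipC in e1.
have hA := ip_pos hbP; have hB := ip_pos hb'P.
have hp : 0 < pairing b' (cor b).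
  by rewrite -(pmulr_lgt0 _ hA) e1 mulr_gt0.
have hq : 0 < pairing b (cor b').
  by rewrite -(pmulr_lgt0 _ hB) e2 mulr_gt0.
have hp1 : pairing b' (cor b) != 1 by apply/eqP => h; exact: (one_false hb hb' h).
have hq1 : pairing b (cor b') != 1 by apply/eqP => h; exact: (one_false hb' hb h).
have cs := cs_ip b' hA.
have hp2 : 2 <= pairing b' (cor b) by lia.
have hq2 : 2 <= pairing b (cor b') by lia.
have [ep eq] := arith_pq hp2 hq2 hA hB e1 e2 cs.
have hyy : ip (b - b') (b - b') = 0.
  rewrite ipBl !ipBr (ipC b' b); rewrite ep in e1; rewrite eq in e2; lia.
exact: (no_null hbP hb'P hne eq ep (ip_eq0 hyy)).
Qed.

Lemma simple_li (c : vec -> int) : \sum_(b <- Delta) c b *: b = 0 ->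
  forall b, b \in Delta -> c b = 0.
Proof.
move=> h.
pose cp b := if 0 <= c b then c b else 0.
pose cm b := if 0 <= c b then 0 else - c b.
have cp0 : forall b, 0 <= cp b by move=> b; rewrite /cp; case: ifP => //; lia.
have cm0 : forall b, 0 <= cm b by move=> b; rewrite /cm; case: ifP => //; lia.
have cpm : forall b, cp b * cm b = 0 by move=> b; rewrite /cp /cm; case: ifP => _; rewrite ?mulr0 ?mul0r.
have cpmE : forall b, c b = cp b - cm b by move=> b; rewrite /cp /cm; case: ifP => _; lia.
set x := \sum_(b <- Delta) cp b *: b.
set x' := \sum_(b <- Delta) cm b *: b.
have exx : x = x'.
  apply/eqP; rewrite -subr_eq0; apply/eqP; rewrite /x /x' -sumrB -[RHS]h.
  by apply: eq_bigr => b _; rewrite -scalerBl -cpmE.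
have hle : ip x x <= 0.
  rewrite {2}exx /x ip_suml big_seq; apply: sumr_le0 => b hb.
  rewrite ipZl ipC /x' ip_suml mulr_sumr big_seq; apply: sumr_le0 => b' hb'.
  rewrite ipZl mulrA.
  case: (eqVneq b b') => [<-|hne]; first by rewrite cpm mul0r.
  rewrite ipC; apply: mulr_ge0_le0; first by apply: mulr_ge0.
  exact: obtuse.
have hx0 : x = 0.
  apply: ip_definite; first by move=> z; exact: simple_Phi.
  by apply/le_anti; rewrite hle ip_ge0.
have hlv : forall (d : vec -> int), (forall b, 0 <= d b) -> \sum_(b <- Delta) d b *: b = 0 ->
    forall b, b \in Delta -> d b = 0.
  move=> d hd hs b hb.
  have := congr1 lv hs; rewrite lv_sum /lv mulmx0 mxE -/lv => hs'.
  have hge : forall z, z \in Delta -> 0 <= lv (d z *: z).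
    by move=> z hz; rewrite lvZ; apply: mulr_ge0 => //; apply: ltW; exact: simple_lv.
  have := @sum_ge0_eq0 _ Delta (fun b => lv (d b *: b)) hge hs' b hb.
  by rewrite lvZ => /eqP; rewrite mulf_eq0 (negbTE (lt0r_neq0 (simple_lv hb))) orbF => /eqP.
move=> b hb; rewrite cpmE (hlv cp cp0 hx0 b hb) (hlv cm cm0 _ b hb) ?subrr //.
by rewrite -/x' -exx.
Qed.

Lemma coeff_unique (c d : vec -> int) :
  \sum_(b <- Delta) c b *: b = \sum_(b <- Delta) d b *: b -> forall b, b \in Delta -> c b = d b.
Proof.
move=> h b hb; apply/eqP; rewrite -subr_eq0; apply/eqP.
apply: (simple_li (c := fun b => c b - d b)) => //.
under eq_bigr do rewrite scalerBl.
by rewrite sumrB h subrr.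
Qed.

Lemma span_filter (P : pred vec) g : in_span (filter P Delta) g ->
  exists c : vec -> int, g = \sum_(b <- Delta) c b *: b /\ forall b, ~~ P b -> c b = 0.
Proof.
case=> c ->; exists (fun b => if P b then c b else 0); split; last by move=> b /negbTE ->.
rewrite big_filter big_mkcond; apply: eq_bigr => b _; by case: (P b); rewrite ?scale0r.
Qed.

Lemma in_span_self (DL : seq vec) b : uniq DL -> b \in DL -> in_span DL b.
Proof.
move=> u hb; exists (fun z => if z == b then 1 else 0); by rewrite sum_ind // scale1r.
Qed.

Lemma K_base (P : pred vec) a d : a \in filter P Delta -> d \in Phi ->
  ~ in_span (filter P Delta) d -> 0 < lv d -> 0 < lv (sref cor a *m d).
Proof.
move=> ha hd hns hpos.
have haD : a \in Delta by move: ha; rewrite mem_filter => /andP[].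
have haP := simple_Phi haD.
have hsd := sref_root haP hd.
case/orP: (root_sign hsd) => // hneg; exfalso; apply: hns.
have hdp : d \in posroots Phi lam by rewrite posrootsE hpos hd.
have hsdp : - (sref cor a *m d) \in posroots Phi lam by rewrite posrootsE lvN oppr_gt0 hneg negPhi.
have [d1 [hd1 e1]] := nn_pos hdp.
have [d2 [hd2 e2]] := nn_pos hsdp.
set k := pairing d (cor a).
have e3 : \sum_(b <- Delta) (d1 b + d2 b) *: b = \sum_(b <- Delta) (if b == a then k else 0) *: b.
  rewrite sum_ind ?uniq_simple //.
  under eq_bigr do rewrite scalerDl.
  by rewrite big_split /= -e1 -e2 sref_apply opprB addrC subrK.
have hc := coeff_unique e3.
have ed : d = d1 a *: a.
  rewrite e1 -(sum_ind _ uniq_simple haD) big_seq [RHS]big_seq; apply: eq_bigr => b hb.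
  case: eqP => [->//|hne]; have := hc b hb; case: eqP => // _ h0.
  have : d1 b = 0 by have := hd1 b; have := hd2 b; lia.
  by move=> ->.
exists (fun b => if b == a then d1 a else 0).
by rewrite ed sum_ind // filter_uniq // uniq_simple.
Qed.

Lemma K_step (P : pred vec) a d : a \in filter P Delta -> d \in Phi ->
  ~ in_span (filter P Delta) d -> (0 < lv (sref cor a *m d)) = (0 < lv d).
Proof.
move=> ha hd hns.
case/orP: (root_sign hd) => hs.
  by rewrite hs (K_base ha hd hns hs).
have hd' := negPhi hd.
have hns' : ~ in_span (filter P Delta) (- d).
  by move=> h; apply: hns; rewrite -[d]opprK; exact: in_span_opp.
have := K_base ha hd' hns' ltac:(by rewrite lvN oppr_gt0).
rewrite mulmxN lvN oppr_gt0 => h.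
by rewrite (lt_gtF h) (lt_gtF hs).
Qed.

Lemma K_gen (P : pred vec) u d : gen_by cor (filter P Delta) u -> d \in Phi ->
  ~ in_span (filter P Delta) d ->
  [/\ u *m d \in Phi, ~ in_span (filter P Delta) (u *m d) & (0 < lv (u *m d)) = (0 < lv d)].
Proof.
have uDL : uniq (filter P Delta) by rewrite filter_uniq // uniq_simple.
have sDL : {subset filter P Delta <= Phi}.
  by move=> b; rewrite mem_filter => /andP[_ /simple_Phi].
move=> gu hd hns; elim: gu => [|a w ha _ [IH1 IH2 IH3]]; first by rewrite mul1mx.
rewrite -mulmxA; split.
- by apply: sref_root => //; exact: sDL.
- by move=> h; apply: IH2; exact: (in_span_sref_inv uDL sDL ha h).
- by rewrite (K_step ha IH1 IH2).
Qed.

Lemma negDL (P : pred vec) w g : gen_by cor (filter P Delta) w ->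
  (forall b, b \in filter P Delta -> lv (w *m b) < 0) ->
  g \in posroots Phi lam -> in_span (filter P Delta) g -> lv (w *m g) < 0.
Proof.
move=> gw hneg hg hsp.
have sDL : {subset filter P Delta <= Phi}.
  by move=> b; rewrite mem_filter => /andP[_ /simple_Phi].
have hgP : g \in Phi by move: hg; rewrite posrootsE => /andP[].
have hwg := gen_Phi sDL gw hgP.
have [d [hd e1]] := nn_pos hg.
have [c [e2 hc]] := span_filter hsp.
have hcd := coeff_unique (etrans (esym e1) e2).
have hle : lv (w *m g) <= 0.
  rewrite e1 mulmx_sumr lv_sum big_seq; apply: sumr_le0 => b hb.
  rewrite -scalemxAr lvZ.
  case hPb: (P b).
    apply: mulr_ge0_le0 => //; apply: ltW; apply: hneg; by rewrite mem_filter hPb hb.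
  by rewrite hcd // hc ?hPb // mul0r.
by rewrite lt_neqAle hle lv_neq0.
Qed.

Lemma gen_mono (g g' : seq vec) u : {subset g <= g'} -> gen_by cor g u -> gen_by cor g' u.
Proof.
move=> s gu; elim: gu => [|a w ha _ IH]; first exact: gen_by1.
by apply: gen_byS => //; exact: s.
Qed.

End Roots.

Lemma inv_eq (m : nat) (u u' : 'M[int]_m) : u *m u' = 1%:M -> invmx u = u'.
Proof.
move=> h; have [uu _] := mulmx1_unit h.
by rewrite -[invmx u]mulmx1 -h mulmxA mulVmx // mul1mx.
Qed.

Theorem mainTheorem2 (C : numClosedFieldType) (n : nat)
  (Phi : seq 'cV[int]_n) (cor : 'cV[int]_n -> 'cV[int]_n)
  (lam : 'rV[int]_n) (S : 'rV[C]_n)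
  (hRD : is_root_datum Phi cor)
  (hlam : regular_functional Phi lam)
  (* S is not regular *)
  (hnonreg : exists2 g, g \in Phi & evS S g = 0)
  (* M = Z_G(S) is a standard Levi: Phi_M = Phi \cap span(Delta_M) *)
  (hstd : forall g, g \in Phi -> (evS S g = 0 <-> in_span (DeltaM Phi lam S) g))
  (v x w : 'M[int]_n)
  (hv : left_min Phi cor lam (DeltaM Phi lam S) v)
  (hw : longest_in Phi cor lam (Rdesc Phi lam v) w)
  (hx : right_min Phi cor lam (Rdesc Phi lam v) x)
  (hvxw : v = x *m w) :
  forall z, gen_by cor (Rdesc Phi lam v) z ->
    left_min Phi cor lam (DeltaM Phi lam S) (x *m z).
Proof.
move=> z hz.
set P := fun a => - (v *m a) \in posroots Phi lam.
set DL := Rdesc Phi lam v.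
have eDL : DL = filter P (simple_roots Phi lam) by [].
have uDL : uniq DL by rewrite eDL filter_uniq // (uniq_simple lam hRD).
have sDL : {subset DL <= Phi}.
  by move=> b; rewrite eDL mem_filter => /andP[_ /simple_Phi].
have sPhi : {subset Phi <= Phi} by [].
case: hv => hvW hvL; case: hx => hxW hxR; case: hw => hwg _.
have [xu xiW xix xxi] := gen_unit hRD sPhi hxW.
have [zu ziW ziz zzi] := gen_unit hRD sDL hz.
have [wu wiW wiw wwi] := gen_unit hRD sDL hwg.
split.
  by apply: gen_mul => //; exact: (gen_mono sDL hz).
move=> g [hg hng] hspan.
have hgP : g \in Phi by move: hg; rewrite posrootsE => /andP[].
set beta := invmx x *m g.
have hb : beta \in Phi := gen_Phi hRD sPhi xiW hgP.
set gam := invmx w *m beta.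
have hgam : gam \in Phi := gen_Phi hRD sDL wiW hb.
have evinv : invmx v = invmx w *m invmx x.
  apply: inv_eq; rewrite hvxw -mulmxA (mulmxA w) wwi mul1mx xxi //.
have exz : invmx (x *m z) = invmx z *m invmx x.
  apply: inv_eq; rewrite -mulmxA (mulmxA z) zzi mul1mx xxi //.
have hgpos : 0 < lv lam gam.
  case/orP: (root_sign hlam hgam) => // hneg; exfalso.
  apply: (hvL g) => //; split => //.
  by rewrite evinv -mulmxA posrootsE lvN oppr_gt0 hneg (negPhi hRD hgam).
have hh : lv lam (invmx z *m beta) < 0.
  move: hng; rewrite exz -mulmxA posrootsE lvN oppr_gt0 => /andP[] //.
have hxb : x *m beta = g by rewrite /beta mulmxA xxi mul1mx.
case: (classic (in_span DL beta)) => hsb.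
  case/orP: (root_sign hlam hb) => hbs.
    have hgp : gam \in posroots Phi lam by rewrite posrootsE hgpos hgam.
    have hgs : in_span DL gam := in_span_gen uDL wiW hsb.
    have hnegb : forall b, b \in filter P (simple_roots Phi lam) -> lv lam (w *m b) < 0.
      move=> b hbD; have hbP := sDL b hbD.
      have hwb := gen_Phi hRD sDL hwg hbP.
      case/orP: (root_sign hlam hwb) => // hpos; exfalso.
      apply: (hxR (w *m b)); last by apply: (in_span_gen uDL hwg); exact: (in_span_self uDL hbD).
      split; first by rewrite posrootsE hpos hwb.
      by rewrite mulmxA -hvxw; move: hbD; rewrite mem_filter => /andP[].
    have := negDL hRD hlam hwg hnegb hgp hgs.
    have -> : w *m gam = beta by rewrite /gam mulmxA wwi mul1mx.
    by rewrite ltNge (ltW hbs).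
  apply: (hxR (- beta)); last exact: in_span_opp.
  split; first by rewrite posrootsE lvN oppr_gt0 hbs (negPhi hRD hb).
  by rewrite mulmxN hxb opprK.
have [_ _ e1] := K_gen hRD hlam wiW hb hsb.
have [_ _ e2] := K_gen hRD hlam ziW hb hsb.
by move: hgpos; rewrite /gam e1 -e2 ltNge (ltW hh).
Qed.
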